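(* Let $C$ be a linear code over $\mathbb{Z}_4+u\mathbb{Z}_4$ generated by a matrix of the form $[I_n\,|\,A]$, where $A$ is an $n\times n$ matrix over $\mathbb{Z}_4+u\mathbb{Z}_4$. If $A$ is symmetric or circulant, then $C$ is formally self-dual, and hence $\phi(C)$ is a formally self-dual code over $\mathbb{Z}_4$ of length $4n$.
   Context: $\mathbb{Z}_4+u\mathbb{Z}_4$ is the commutative ring of characteristic $4$ with $u^2=0$. A linear code over a ring $R$ is an $R$-submodule of $R^N$; duals are taken with respect to the Euclidean inner product $\sum_i x_iy_i$ in $R$. Lee weight on $\mathbb{Z}_4$: $0,1,2,1$ for $0,1,2,3$; on $\mathbb{Z}_4+u\mathbb{Z}_4$: $w_L(a+ub)=w_L(b)+w_L(a+b)$; extended additively to vectors. A linear code (over either ring) is formally self-dual if it has the same Lee weight enumerator as its dual. The Gray map $\phi:(\mathbb{Z}_4+u\mathbb{Z}_4)^{N}\to\mathbb{Z}_4^{2N}$ is $\phi(\overline{a}+u\overline{b})=(\overline{b},\overline{a}+\overline{b})$ for $\overline{a},\overline{b}\in\mathbb{Z}_4^N$. A circulant matrix is one in which each row is the cyclic right shift of the previous row. *)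

(* Defs.v *)
From HB Require Import structures.
From mathcomp Require Import all_boot all_order all_algebra.
From mathcomp Require Import ring.
Set Implicit Arguments. Unset Strict Implicit. Unset Printing Implicit Defensive.
Import GRing.Theory.
Local Open Scope ring_scope.

(* The ring Z4 + u Z4 (u^2 = 0): the element a + u b is the pair (a,b). *)
Definition Z4u : Type := ('Z_4 * 'Z_4)%type.
HB.instance Definition _ := Finite.copy Z4u ('Z_4 * 'Z_4)%type.
HB.instance Definition _ := GRing.Zmodule.copy Z4u ('Z_4 * 'Z_4)%type.

Definition z4u_one : Z4u := (1, 0).
(* (a + u b)(c + u d) = ac + u (ad + bc) *)
Definition z4u_mul (x y : Z4u) : Z4u := (x.1 * y.1, x.1 * y.2 + x.2 * y.1).

Lemma z4u_mulA : associative z4u_mul.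
Proof.
move=> [a b] [c d] [e f]; rewrite /z4u_mul; cbn [fst snd].
have h1 : a * (c * e) = a * c * e :> 'Z_4 by ring.
have h2 : a * (c * f + d * e) + b * (c * e) = a * c * f + (a * d + b * c) * e :> 'Z_4 by ring.
by rewrite h1 h2.
Qed.
Lemma z4u_mulC : commutative z4u_mul.
Proof.
move=> [a b] [c d]; rewrite /z4u_mul; cbn [fst snd].
have h1 : a * c = c * a :> 'Z_4 by ring.
have h2 : a * d + b * c = c * b + d * a :> 'Z_4 by ring.
by rewrite h1 h2.
Qed.
Lemma z4u_mul1 : left_id z4u_one z4u_mul.
Proof.
move=> [a b]; rewrite /z4u_mul /z4u_one; cbn [fst snd].
have h1 : 1 * a = a :> 'Z_4 by ring.
have h2 : 1 * b + 0 * a = b :> 'Z_4 by ring.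
by rewrite h1 h2.
Qed.
Lemma z4u_mulDl : left_distributive z4u_mul +%R.
Proof.
move=> [a b] [c d] [e f]; rewrite /z4u_mul; cbn [fst snd].
have h1 : (a + c) * e = a * e + c * e :> 'Z_4 by ring.
have h2 : (a + c) * f + (b + d) * e = (a * f + b * e) + (c * f + d * e) :> 'Z_4 by ring.
by rewrite h1 h2.
Qed.
Lemma z4u_one_neq0 : z4u_one != 0.
Proof. by []. Qed.

HB.instance Definition _ := GRing.Zmodule_isComNzRing.Build Z4u
  z4u_mulA z4u_mulC z4u_mul1 z4u_mulDl z4u_one_neq0.

Definition uZ4u : Z4u := (0, 1).
Definition mkZ4u (a b : 'Z_4) : Z4u := (a, b).

Section Codes.
Variable R : finComNzRingType.

Definition linear_code (N : nat) (C : {set 'rV[R]_N}) : Prop :=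
  [/\ 0 \in C,
      (forall x y, x \in C -> y \in C -> x + y \in C) &
      (forall (a : R) x, x \in C -> a *: x \in C)].

Definition euclid (N : nat) (x y : 'rV[R]_N) : R := \sum_(i < N) x ord0 i * y ord0 i.

Definition dual_code (N : nat) (C : {set 'rV[R]_N}) : {set 'rV[R]_N} :=
  [set y | [forall c in C, euclid c y == 0]].

Definition weight_enum (N : nat) (wt : 'rV[R]_N -> nat) (C : {set 'rV[R]_N})
  : {poly int} := \sum_(c in C) 'X^(wt c).

Definition formally_self_dual (N : nat) (wt : 'rV[R]_N -> nat)
  (C : {set 'rV[R]_N}) : Prop :=
  linear_code C /\ weight_enum wt C = weight_enum wt (dual_code C).

Definition gen_code (k N : nat) (G : 'M[R]_(k, N)) : {set 'rV[R]_N} :=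
  [set x *m G | x : 'rV[R]_k].
End Codes.

Definition leeZ4 (x : 'Z_4) : nat := minn (val x) (4 - val x).
Definition leeZ4u (x : Z4u) : nat := leeZ4 x.2 + leeZ4 (x.1 + x.2).

Definition leeZ4_vec (N : nat) (v : 'rV['Z_4]_N) : nat := \sum_(i < N) leeZ4 (v ord0 i).
Definition leeZ4u_vec (N : nat) (v : 'rV[Z4u]_N) : nat := \sum_(i < N) leeZ4u (v ord0 i).

Definition gray (N : nat) (v : 'rV[Z4u]_N) : 'rV['Z_4]_(N + N) :=
  row_mx (\row_i (v ord0 i).2) (\row_i ((v ord0 i).1 + (v ord0 i).2)).

Definition circulant (R : Type) (n : nat) (A : 'M[R]_n) : Prop :=
  forall (i j : 'I_n) (Hi : (i.+1 < n)%N), A (Ordinal Hi) j = A i (ord_pred j).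

(* Main.v *)
Require Import Defs.
From HB Require Import structures.
From mathcomp Require Import all_boot all_order all_algebra ring fingroup perm zify.
Import GRing.Theory.
Set Implicit Arguments. Unset Strict Implicit.
Local Open Scope ring_scope.

Lemma euclidE (R : finComNzRingType) N (v w : 'rV[R]_N) : euclid v w = (v *m w^T) ord0 ord0.
Proof. rewrite /euclid mxE; apply: eq_bigr => i _; by rewrite mxE. Qed.

Lemma gen_codeP (R : finComNzRingType) k N (G : 'M[R]_(k,N)) c :
  reflect (exists x, c = x *m G) (c \in gen_code G).
Proof. apply: (iffP imsetP) => [[x _ ->]|[x ->]]; by exists x. Qed.

Lemma gen_code_lin (R : finComNzRingType) k N (G : 'M[R]_(k,N)) : linear_code (gen_code G).
Proof.
split.
- by apply/gen_codeP; exists 0; rewrite mul0mx.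
- by move=> x y /gen_codeP [a ->] /gen_codeP [b ->]; apply/gen_codeP; exists (a+b); rewrite mulmxDl.
- by move=> a x /gen_codeP [b ->]; apply/gen_codeP; exists (a *: b); rewrite scalemxAl.
Qed.

Lemma dualE n (A : 'M[Z4u]_n) y :
  (y \in dual_code (gen_code (row_mx 1%:M A))) = (lsubmx y == -(rsubmx y *m A^T)).
Proof.
set V := (lsubmx y)^T + A *m (rsubmx y)^T.
have key : forall x, euclid (x *m row_mx 1%:M A) y = (x *m V) ord0 ord0.
  move=> x; rewrite euclidE -{1}(hsubmxK y) tr_row_mx -mulmxA mul_row_col mul1mx //.
have VT : V^T = lsubmx y + rsubmx y *m A^T by rewrite /V linearD /= trmx_mul !trmxK.
clearbody V; rewrite inE -addr_eq0 -VT.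
apply/forall_inP/idP.
- move=> H; apply/eqP; apply/matrixP => i j; rewrite (ord1 i) mxE [RHS]mxE.
  have := H ('e_j *m row_mx 1%:M A); rewrite key.
  have -> : (('e_j : 'rV[Z4u]_n) *m V) ord0 ord0 = V j ord0.
    rewrite [LHS]mxE (bigD1 j) //= mxE !eqxx mul1r big1 ?addr0 //; move=> k /negbTE nk.
    by rewrite mxE nk andbF mul0r.
  move=> /(_ _)/eqP -> //.
  by apply/gen_codeP; exists ('e_j).
- move=> /eqP HV c /gen_codeP [x ->]; rewrite key.
  have -> : V = 0 by rewrite -[V]trmxK HV trmx0.
  by rewrite mulmx0 mxE.
Qed.

Lemma wenum_map (R1 R2 : finComNzRingType) N1 N2 (f : 'rV[R1]_N1 -> 'rV[R2]_N2)
  wt1 wt2 (C : {set 'rV[R1]_N1}) :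
  injective f -> (forall v, wt2 (f v) = wt1 v) ->
  weight_enum wt2 (f @: C) = weight_enum wt1 C.
Proof.
move=> fi fw; rewrite /weight_enum big_imset /=; last by move=> x y _ _; apply: fi.
by apply: eq_bigr => v _; rewrite fw.
Qed.

Lemma l4 : forall x : 'Z_4, leeZ4 (-x) = leeZ4 x.
Proof. by case=> [[|[|[|[|k]]]] Hk]. Qed.
Lemma oppE (x : Z4u) : -x = (-x.1, -x.2). Proof. by case: x. Qed.
Lemma addE (x y : Z4u) : x + y = (x.1 + y.1, x.2 + y.2). Proof. by case: x; case: y. Qed.
Lemma luN x : leeZ4u (-x) = leeZ4u x.
Proof. by rewrite oppE /leeZ4u /= -opprD !l4. Qed.

Lemma lee_row N1 N2 (a : 'rV[Z4u]_N1) (b : 'rV[Z4u]_N2) :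
  leeZ4u_vec (row_mx a b) = (leeZ4u_vec a + leeZ4u_vec b)%N.
Proof. by rewrite /leeZ4u_vec big_split_ord /=; congr addn; apply: eq_bigr => i _;
  rewrite ?row_mxEl ?row_mxEr. Qed.
Lemma leeN N (a : 'rV[Z4u]_N) : leeZ4u_vec (- a) = leeZ4u_vec a.
Proof. by apply: eq_bigr => i _; rewrite mxE luN. Qed.

Lemma SD n (A P : 'M[Z4u]_n) : P *m P = 1%:M -> A *m P = P *m A^T ->
  (forall v, leeZ4u_vec (v *m P) = leeZ4u_vec v) ->
  let C := gen_code (row_mx 1%:M A) in
  weight_enum (@leeZ4u_vec (n + n)) C = weight_enum (@leeZ4u_vec (n + n)) (dual_code C).
Proof.
move=> PP AP HP C.
pose f := fun v : 'rV[Z4u]_(n+n) => row_mx (-(rsubmx v *m P)) (lsubmx v *m P).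
have finj : injective f.
  move=> v w /eq_row_mx [/oppr_inj h1 h2].
  rewrite -(hsubmxK v) -(hsubmxK w); congr row_mx.
    by rewrite -(mulmx1 (lsubmx v)) -PP mulmxA h2 -mulmxA PP mulmx1.
  by rewrite -(mulmx1 (rsubmx v)) -PP mulmxA h1 -mulmxA PP mulmx1.
have fw : forall v, leeZ4u_vec (f v) = leeZ4u_vec v.
  by move=> v; rewrite /f lee_row leeN !HP -[in RHS](hsubmxK v) lee_row addnC.
have E : dual_code C = f @: C.
  apply/setP => y; rewrite dualE; apply/idP/imsetP.
  - move=> /eqP Hy; exists (rsubmx y *m P *m row_mx 1%:M A).
      by apply/gen_codeP; eexists.
    rewrite /f mul_mx_row mulmx1 row_mxKl row_mxKr -[y in LHS]hsubmxK Hy.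
    congr row_mx.
      by rewrite -!mulmxA AP [P *m (P *m _)]mulmxA PP mul1mx.
    by rewrite -mulmxA PP mulmx1.
  - move=> [v /gen_codeP [x ->] ->].
    by rewrite /f mul_mx_row mulmx1 !row_mxKl !row_mxKr -!mulmxA AP.
by rewrite E (@wenum_map _ _ _ _ f _ _ C finj fw).
Qed.

Definition gz N (z : 'rV[Z4u]_N) : 'rV['Z_4]_(N + N) :=
  row_mx (\row_i (- (z ord0 i).2)) (\row_i ((z ord0 i).1 + (z ord0 i).2)).
Definition ungz N (y : 'rV['Z_4]_(N + N)) : 'rV[Z4u]_N :=
  \row_i ((rsubmx y ord0 i + lsubmx y ord0 i, - lsubmx y ord0 i) : Z4u).
Definition ungray N (y : 'rV['Z_4]_(N + N)) : 'rV[Z4u]_N :=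
  \row_i ((rsubmx y ord0 i - lsubmx y ord0 i, lsubmx y ord0 i) : Z4u).

Lemma gray_can N : cancel (@gray N) (@ungray N).
Proof.
move=> c; apply/rowP => i; rewrite /ungray /gray mxE row_mxKl row_mxKr !mxE addrK.
by case: (c ord0 i).
Qed.
Lemma gz_can N : cancel (@gz N) (@ungz N).
Proof.
move=> c; apply/rowP => i; rewrite /ungz /gz mxE row_mxKl row_mxKr !mxE addrK opprK.
by case: (c ord0 i).
Qed.
Lemma ungz_can N : cancel (@ungz N) (@gz N).
Proof.
move=> y; rewrite -[RHS]hsubmxK /gz; congr row_mx; apply/rowP => i; rewrite !mxE /=.
  by rewrite opprK.
by rewrite addrK.
Qed.

Lemma lee4_row N1 N2 (a : 'rV['Z_4]_N1) (b : 'rV['Z_4]_N2) :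
  leeZ4_vec (row_mx a b) = (leeZ4_vec a + leeZ4_vec b)%N.
Proof. by rewrite /leeZ4_vec big_split_ord /=; congr addn; apply: eq_bigr => i _;
  rewrite ?row_mxEl ?row_mxEr. Qed.

Lemma gray_w N (c : 'rV[Z4u]_N) : leeZ4_vec (gray c) = leeZ4u_vec c.
Proof.
rewrite /gray lee4_row /leeZ4_vec /leeZ4u_vec -big_split /=.
by apply: eq_bigr => i _; rewrite !mxE.
Qed.
Lemma gz_w N (c : 'rV[Z4u]_N) : leeZ4_vec (gz c) = leeZ4u_vec c.
Proof.
rewrite /gz lee4_row /leeZ4_vec /leeZ4u_vec -big_split /=.
by apply: eq_bigr => i _; rewrite !mxE l4.
Qed.

Lemma euclid_row (R : finComNzRingType) N1 N2 (a c : 'rV[R]_N1) (b d : 'rV[R]_N2) :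
  euclid (row_mx a b) (row_mx c d) = euclid a c + euclid b d.
Proof. by rewrite /euclid big_split_ord /=; congr (_ + _); apply: eq_bigr => i _;
  rewrite ?row_mxEl ?row_mxEr. Qed.

Definition lam (e : Z4u) : 'Z_4 := e.1 + e.2.
Lemma lam_sum N (F : 'I_N -> Z4u) : lam (\sum_i F i) = \sum_i lam (F i).
Proof.
apply: (big_morph lam); last by rewrite /lam /= addr0.
by move=> x y; rewrite /lam addE /=; ring.
Qed.

Lemma f3 (c z : Z4u) : c.2 * -z.2 + (c.1+c.2)*(z.1+z.2) = lam (c*z).
Proof. rewrite /lam. change ((c*z).1) with (c.1*z.1). change ((c*z).2) with (c.1*z.2 + c.2*z.1). ring. Qed.

Lemma euclid_g N (c z : 'rV[Z4u]_N) : euclid (gray c) (gz z) = lam (euclid c z).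
Proof.
rewrite euclid_row /euclid lam_sum -big_split /=.
by apply: eq_bigr => i _; rewrite !mxE f3.
Qed.

Lemma lam_u (e : Z4u) : lam e = 0 -> lam (uZ4u * e) = 0 -> e = 0.
Proof.
case: e => a b; rewrite /lam /GRing.mul /= => h1.
rewrite !mul0r mul1r !add0r => h2; move: h1; rewrite h2 add0r => ->; done.
Qed.

Lemma euclidZl (R : finComNzRingType) N (a : R) (c z : 'rV[R]_N) :
  euclid (a *: c) z = a * euclid c z.
Proof. by rewrite /euclid mulr_sumr; apply: eq_bigr => i _; rewrite mxE mulrA. Qed.

Lemma dual_gray N (C : {set 'rV[Z4u]_N}) : linear_code C ->
  dual_code [set gray c | c in C] = [set gz z | z in dual_code C].
Proof.
move=> [_ _ CZ]; apply/setP => y; apply/idP/imsetP.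
- move=> Hy; exists (ungz y); last by rewrite ungz_can.
  have H : forall c, c \in C -> lam (euclid c (ungz y)) = 0.
    move=> c cC; rewrite -euclid_g ungz_can.
    by move: Hy; rewrite inE => /forall_inP/(_ (gray c) (imset_f _ cC))/eqP.
  rewrite inE; apply/forall_inP => c cC; apply/eqP; apply: lam_u; first exact: H.
  by rewrite -euclidZl; apply: H; apply: CZ.
- move=> [z zD ->]; rewrite inE; apply/forall_inP => c' /imsetP [c cC ->].
  rewrite euclid_g; move: zD; rewrite inE => /forall_inP/(_ c cC)/eqP ->.
  by rewrite /lam /= addr0.
Qed.

Lemma gray_lin N (C : {set 'rV[Z4u]_N}) : linear_code C -> linear_code [set gray c | c in C].
Proof.
move=> [C0 CD CZ]; split.
- have -> : (0 : 'rV['Z_4]_(N+N)) = gray 0.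
    rewrite /gray -row_mx0; congr row_mx; apply/rowP => i; rewrite !mxE /= ?addr0 //; reflexivity.
  exact: imset_f.
- move=> x y /imsetP [a aC ->] /imsetP [b bC ->].
  have -> : gray a + gray b = gray (a + b).
    rewrite /gray add_row_mx; congr row_mx; apply/rowP => i; rewrite !mxE //=.
    ring.
  exact/imset_f/CD.
- move=> a x /imsetP [c cC ->].
  have -> : a *: gray c = gray (((a, 0) : Z4u) *: c).
    rewrite /gray scale_row_mx; congr row_mx; apply/rowP => i; rewrite !mxE //=.
      by rewrite mul0r addr0.
    by rewrite mul0r addr0 mulrDr.
  exact/imset_f/CZ.
Qed.

Lemma lee_colperm N (s : 'S_N) (v : 'rV[Z4u]_N) : leeZ4u_vec (col_perm s v) = leeZ4u_vec v.
Proof.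
rewrite /leeZ4u_vec [RHS](reindex_inj (@perm_inj _ s)).
by apply: eq_bigr => i _; rewrite mxE.
Qed.

Lemma circ_val m (A : 'M[Z4u]_m.+1) : circulant A ->
  forall (i j : 'I_m.+1),
  A i j = A ord0 (Ordinal (@ltn_pmod (j + (m.+1 - i)) m.+1 isT)).
Proof.
move=> cA [i Hi]; elim: i Hi => [|i IH] Hi j.
  congr (A _ _); apply: val_inj => //=.
  by rewrite subn0 modnDr modn_small.
transitivity (A (Ordinal (ltnW Hi)) (ord_pred j)); first exact: (cA (Ordinal (ltnW Hi)) j Hi).
rewrite IH; congr (A _ _); apply: val_inj => /=.
rewrite modnDml.
have -> : ((j + m.+1).-1 + (m.+1 - i) = j + (m.+1 - i.+1) + m.+1)%N by move: Hi; have := ltn_ord j; clear; lia.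
by rewrite modnDr.
Qed.

Lemma circ_sym m (A : 'M[Z4u]_m.+1) : circulant A ->
  forall i j : 'I_m.+1, A i (rev_ord j) = A j (rev_ord i).
Proof.
move=> cA i j; rewrite (circ_val cA i) (circ_val cA j); congr (A _ _); apply: val_inj => /=.
congr modn; have := ltn_ord j; have := ltn_ord i; clear; lia.
Qed.

Lemma circ_P n (A : 'M[Z4u]_n) : circulant A ->
  exists P : 'M[Z4u]_n, [/\ P *m P = 1%:M, A *m P = P *m A^T &
    forall v, leeZ4u_vec (v *m P) = leeZ4u_vec v].
Proof.
case: n A => [|m] A cA.
  exists 1%:M; split; first by rewrite mulmx1.
    by apply/matrixP => i; case: i.
  by move=> v; rewrite mulmx1.
pose s : 'S_m.+1 := perm (@rev_ord_inj m.+1).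
have ss : (s * s = 1)%g by apply/permP => i; rewrite permM !permE rev_ordK ?perm1.
have sV : (s^-1 = s)%g by rewrite -[(s^-1)%g]mulg1 -ss mulKg.
exists (perm_mx s); split.
- by rewrite -perm_mxM ss perm_mx1.
- rewrite -row_permE -{1}sV -col_permE; apply/matrixP => i j; rewrite !mxE !permE.
  exact: circ_sym.
- by move=> v; rewrite -{1}sV -col_permE lee_colperm.
Qed.

Theorem corollary5p3 (n : nat) (A : 'M[Z4u]_n) :
  (A^T = A \/ circulant A) ->
  let C := gen_code (row_mx (1%:M : 'M[Z4u]_n) A) in
  formally_self_dual (@leeZ4u_vec (n + n)) C /\
  formally_self_dual (@leeZ4_vec ((n + n) + (n + n))) [set gray c | c in C].
Proof.
move=> HA C.
have [P [PP AP HP]] : exists P : 'M[Z4u]_n, [/\ P *m P = 1%:M, A *m P = P *m A^T &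
    forall v, leeZ4u_vec (v *m P) = leeZ4u_vec v].
  case: HA => [HT|cA]; last exact: circ_P.
  exists 1%:M; split; first by rewrite mulmx1.
    by rewrite mulmx1 mul1mx HT.
  by move=> v; rewrite mulmx1.
have Clin : linear_code C by apply: gen_code_lin.
have E1 : weight_enum (@leeZ4u_vec (n + n)) C = weight_enum (@leeZ4u_vec (n + n)) (dual_code C)
  by exact: (SD PP AP HP).
split; first by split.
split; first exact: gray_lin.
rewrite dual_gray //.
rewrite (@wenum_map _ _ _ _ (@gray (n+n)) _ _ C (can_inj (@gray_can _)) (@gray_w _)).
rewrite (@wenum_map _ _ _ _ (@gz (n+n)) _ _ _ (can_inj (@gz_can _)) (@gz_w _)).
exact: E1.
Qed.
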